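(* Let $\rho$ be a left-c.e. semi-measure. Then $X\in2^\omega$ is weakly 2-random for $\rho$ (i.e., $X\in\mathsf{W2R}_\rho$) if and only if $X$ is blindly weakly 2-random for $\overline\rho$.
   Context: $2^{<\omega}$ is the set of finite binary strings, $\varepsilon$ the empty string, $[\![\sigma]\!]=\{X\in2^\omega:\sigma\preceq X\}$, $[\![S]\!]=\bigcup_{\sigma\in S}[\![\sigma]\!]$. A semi-measure is $\rho:2^{<\omega}\to[0,1]$ with $\rho(\varepsilon)=1$ and $\rho(\sigma)\ge\rho(\sigma0)+\rho(\sigma1)$; left-c.e. means its values are uniformly approximable from below by computable non-decreasing rational sequences. For $E\subseteq2^{<\omega}$, $\rho(E)=\sum_{\sigma\in E}\rho(\sigma)$. $X\in\mathsf{W2R}_\rho$ iff $X\notin\bigcap_i[\![U_i]\!]$ for every uniformly c.e. sequence $(U_i)$ of subsets of $2^{<\omega}$ with $\lim_i\rho(U_i)=0$. $\overline\rho(\sigma)=\inf_{n\ge|\sigma|}\sum_{\tau\succeq\sigma,\,|\tau|=n}\rho(\tau)$, which determines a Borel measure $\overline\rho$ on $2^\omega$ (of total mass possibly less than 1). $X$ is blindly weakly 2-random for $\overline\rho$ iff $X\notin\bigcap_i\mathcal U_i$ for every uniformly effectively open (uniformly $\Sigma^0_1$) sequence $(\mathcal U_i)$ of subsets of $2^\omega$ with $\lim_i\overline\rho(\mathcal U_i)=0$. *)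

(* Defs.v *)
From HB Require Import structures.
From mathcomp Require Import all_boot all_order all_algebra.
From mathcomp Require Import all_classical all_reals all_analysis.
Set Implicit Arguments. Unset Strict Implicit. Unset Printing Implicit Defensive.
Import Order.TTheory GRing.Theory Num.Theory.
Import numFieldNormedType.Exports.
Local Open Scope classical_set_scope.
Local Open Scope ring_scope.

Definition npair (x y : nat) : nat := ((x + y) * (x + y).+1) %/ 2 + y.

(* its inverse, enumerating the diagonals (d,0),(d-1,1),...,(0,d) *)
Fixpoint nunpair (n : nat) : nat * nat :=
  match n with
  | 0 => (0, 0)
  | n'.+1 => let: (x, y) := nunpair n' in
             match x with 0 => (y.+1, 0) | x'.+1 => (x', y.+1) end
  end.

(* bijective base-2 coding of finite binary strings (seq bool) into nat *)
Fixpoint scode (s : seq bool) : nat :=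
  match s with
  | [::] => 0
  | b :: s' => (scode s').*2 + (if b then 2 else 1)
  end.

Inductive prf : Type :=
| PZero | PSucc | PId | PFst | PSnd
| PComp of prf & prf
| PPair of prf & prf
| PRec of prf & prf
| PMu of prf.

Inductive peval : prf -> nat -> nat -> Prop :=
| ev_zero x : peval PZero x 0
| ev_succ x : peval PSucc x x.+1
| ev_id x : peval PId x x
| ev_fst x : peval PFst x (nunpair x).1
| ev_snd x : peval PSnd x (nunpair x).2
| ev_comp f g x y z : peval g x y -> peval f y z -> peval (PComp f g) x z
| ev_pair f g x y z : peval f x y -> peval g x z -> peval (PPair f g) x (npair y z)
| ev_rec0 f g x a y : nunpair x = (a, 0) -> peval f a y -> peval (PRec f g) x y
| ev_recS f g x a n y z : nunpair x = (a, n.+1) ->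
    peval (PRec f g) (npair a n) y -> peval g (npair a (npair n y)) z ->
    peval (PRec f g) x z
| ev_mu f x n : peval f (npair x n) 0 ->
    (forall m, (m < n)%N -> exists k, peval f (npair x m) k.+1) ->
    peval (PMu f) x n.

Definition computable (h : nat -> nat) : Prop :=
  exists p : prf, forall x, peval p x (h x).

Definition unif_ce (U : nat -> set (seq bool)) : Prop :=
  exists p : prf, forall i s, U i s <-> exists y, peval p (npair i (scode s)) y.

Definition cantor := nat -> bool.

Definition cyl (s : seq bool) : set cantor :=
  [set X | forall i, (i < size s)%N -> X i = nth false s i].

Definition cylS (S : set (seq bool)) : set cantor := \bigcup_(s in S) cyl s.

Definition unif_sigma01 (V : nat -> set cantor) : Prop :=
  exists U, unif_ce U /\ forall i, V i = cylS (U i).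

Definition cylinders : set (set cantor) := [set A | exists s, A = cyl s].
Definition cantorB := g_sigma_algebraType cylinders.

Section SemiMeasure.
Variable R : realType.

Definition semi_measure (rho : seq bool -> R) : Prop :=
  (forall s, 0 <= rho s <= 1) /\ rho [::] = 1 /\
  (forall s, rho (rcons s false) + rho (rcons s true) <= rho s).

Definition decQ (m : nat) : R :=
  let: (a, r) := nunpair m in let: (b, c) := nunpair r in
  (a%:R - b%:R) / (c.+1)%:R.

Definition left_ce (rho : seq bool -> R) : Prop :=
  exists h : nat -> nat, computable h /\
    forall s, (forall n, decQ (h (npair (scode s) n)) <= decQ (h (npair (scode s) n.+1)))
      /\ ((fun n : nat => decQ (h (npair (scode s) n))) : R^nat) @ \oo --> (rho s : R).

Definition rho_set (rho : seq bool -> R) (E : set (seq bool)) : \bar R :=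
  (\esum_(s in E) (rho s)%:E)%E.

Definition rho_bar (rho : seq bool -> R) (s : seq bool) : R :=
  inf [set (\sum_(t : k.-tuple bool) rho (s ++ tval t)) | k in [set: nat]].

Definition W2R (rho : seq bool -> R) (X : cantor) : Prop :=
  forall U : nat -> set (seq bool), unif_ce U ->
    (fun i => rho_set rho (U i)) @ \oo --> 0%E ->
    ~ (forall i, cylS (U i) X).

Definition blind_W2R (mu : {measure set cantorB -> \bar R}) (X : cantor) : Prop :=
  forall V : nat -> set cantor, unif_sigma01 V ->
    (fun i => mu (V i)) @ \oo --> 0%E ->
    ~ (forall i, V i X).

End SemiMeasure.

(* Main.v *)
Require Import Defs.
From HB Require Import structures.
From mathcomp Require Import all_boot all_order all_algebra.
From mathcomp Require Import all_classical all_reals all_analysis.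
From mathcomp Require Import zify lra.
Import Order.TTheory GRing.Theory Num.Theory.
Set Implicit Arguments. Unset Strict Implicit. Unset Printing Implicit Defensive.

Definition tri d := (d * d.+1) %/ 2.
Lemma triS d : tri d.+1 = tri d + d.+1.
Proof.
rewrite /tri.
have -> : d.+1 * d.+2 = d.+1 * 2 + d * d.+1 by nia.
by rewrite divnMDl // addnC.
Qed.
Lemma npairE x y : npair x y = tri (x + y) + y. Proof. by []. Qed.

Definition nnext (p : nat * nat) := let: (x, y) := p in
  match x with 0 => (y.+1, 0) | x'.+1 => (x', y.+1) end.
Lemma nunpairS n : nunpair n.+1 = nnext (nunpair n).
Proof. by rewrite /=; case: (nunpair n). Qed.

Lemma nunpair_npair_aux n : forall x y, npair x y = n -> nunpair n = (x, y).
Proof.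
elim: n => [|n IH] x y.
  rewrite npairE; case: y => [|y]; last by rewrite addnS.
  case: x => [|x] //; by rewrite addn0 triS addnS.
rewrite npairE => E.
case: y E => [|y] E.
  case: x E => [|x] E; first by [].
  have E' : tri x + x = n by move: E; rewrite !addn0 triS; lia.
  rewrite nunpairS (IH 0 x); first by [].
  by rewrite npairE add0n.
rewrite nunpairS (IH x.+1 y) //.
rewrite npairE; move: E; rewrite !addSn !addnS; lia.
Qed.
Lemma nunpair_npair x y : nunpair (npair x y) = (x, y).
Proof. exact: nunpair_npair_aux. Qed.


Notation fs x := (nunpair x).1.
Notation sn x := (nunpair x).2.

Lemma fs_pair x y : fs (npair x y) = x. Proof. by rewrite nunpair_npair. Qed.
Lemma sn_pair x y : sn (npair x y) = y. Proof. by rewrite nunpair_npair. Qed.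

Lemma cmp_ext f g : (forall x, f x = g x) -> computable f -> computable g.
Proof. move=> E [p Hp]; exists p => x; rewrite -E; exact: Hp. Qed.

Lemma cmp_id : computable (fun x => x).
Proof. exists PId => x; constructor. Qed.
Lemma cmp_zero : computable (fun _ => 0).
Proof. exists PZero => x; constructor. Qed.
Lemma cmp_comp f g : computable f -> computable g -> computable (fun x => f (g x)).
Proof. move=> [p Hp] [q Hq]; exists (PComp p q) => x; econstructor; eauto. Qed.
Lemma cmp_succ f : computable f -> computable (fun x => (f x).+1).
Proof. move=> H; apply: (cmp_comp (f := S)) H; exists PSucc => x; constructor. Qed.
Lemma cmp_fs f : computable f -> computable (fun x => fs (f x)).
Proof. move=> H; apply: (cmp_comp (f := fun x => fs x)) H; exists PFst => x; constructor. Qed.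
Lemma cmp_sn f : computable f -> computable (fun x => sn (f x)).
Proof. move=> H; apply: (cmp_comp (f := fun x => sn x)) H; exists PSnd => x; constructor. Qed.
Lemma cmp_pair f g : computable f -> computable g -> computable (fun x => npair (f x) (g x)).
Proof. move=> [p Hp] [q Hq]; exists (PPair p q) => x; econstructor; eauto. Qed.
Lemma cmp_const c : computable (fun _ => c).
Proof. elim: c => [|c IH]; [exact: cmp_zero | exact: cmp_succ IH]. Qed.

Fixpoint prim (F G : nat -> nat) (a k : nat) : nat :=
  match k with 0 => F a | k'.+1 => G (npair a (npair k' (prim F G a k'))) end.

Lemma cmp_prim0 F G : computable F -> computable G ->
  computable (fun x => prim F G (fs x) (sn x)).
Proof.
move=> [p Hp] [q Hq]; exists (PRec p q) => x.
suff H : forall k a x, nunpair x = (a, k) -> peval (PRec p q) x (prim F G a k).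
  apply: H; by case: (nunpair x).
elim=> [|k IH] a y Ey /=.
  by apply: ev_rec0; eauto.
apply: ev_recS; eauto.
apply: IH; by rewrite ?nunpair_npair.
Qed.

Lemma cmp_loop I S B : computable I -> computable S -> computable B ->
  computable (fun x => prim I S x (B x)).
Proof.
move=> HI HS HB.
have := cmp_comp (cmp_prim0 HI HS) (cmp_pair cmp_id HB).
by apply: cmp_ext => x; rewrite fs_pair sn_pair.
Qed.

Lemma prim_param (F G : nat -> nat -> nat) c a k :
  prim (F c) (G c) a k =
  prim (fun w => F (fs w) (sn w))
       (fun q => G (fs (fs q)) (npair (sn (fs q)) (sn q))) (npair c a) k.
Proof. elim: k => [|k IH] /=; by rewrite ?IH !fs_pair !sn_pair. Qed.

Lemma cmp2 (f : nat -> nat -> nat) g h :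
  computable (fun w => f (fs w) (sn w)) -> computable g -> computable h ->
  computable (fun x => f (g x) (h x)).
Proof.
move=> Hf Hg Hh; have := cmp_comp Hf (cmp_pair Hg Hh).
by apply: cmp_ext => x; rewrite fs_pair sn_pair.
Qed.

Lemma cmp_primP (F G : nat -> nat -> nat) C A K :
  computable (fun w => F (fs w) (sn w)) -> computable (fun w => G (fs w) (sn w)) ->
  computable C -> computable A -> computable K ->
  computable (fun x => prim (F (C x)) (G (C x)) (A x) (K x)).
Proof.
move=> HF HG HC HA HK.
have H1 : computable (fun q => G (fs (fs q)) (npair (sn (fs q)) (sn q))).
  apply: (cmp2 (f := G)) => //; [exact: cmp_fs (cmp_fs cmp_id) |
    exact: cmp_pair (cmp_sn (cmp_fs cmp_id)) (cmp_sn cmp_id)].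
have H2 := cmp_prim0 HF H1.
have := cmp_comp H2 (cmp_pair (cmp_pair HC HA) HK).
apply: cmp_ext => x; by rewrite fs_pair sn_pair prim_param.
Qed.

Definition ifz (n a b : nat) := if n is 0 then a else b.

Lemma cmp_ifz f g h : computable f -> computable g -> computable h ->
  computable (fun x => ifz (f x) (g x) (h x)).
Proof.
move=> Hf Hg Hh.
have := @cmp_primP (fun c _ => fs c) (fun c _ => sn c) (fun x => npair (g x) (h x))
  (fun _ => 0) f (cmp_fs (cmp_fs cmp_id)) (cmp_sn (cmp_fs cmp_id))
  (cmp_pair Hg Hh) (cmp_const 0) Hf.
apply: cmp_ext => x; by case: (f x) => [|k] /=; rewrite ?fs_pair ?sn_pair.
Qed.

Lemma cmp_rec (F G : nat -> nat -> nat) A K :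
  computable (fun w => F (fs w) (sn w)) -> computable (fun w => G (fs w) (sn w)) ->
  computable A -> computable K ->
  computable (fun x => prim (F x) (G x) (A x) (K x)).
Proof. move=> HF HG HA HK; exact: (cmp_primP HF HG cmp_id HA HK). Qed.

Lemma cmp_rec0 (F G : nat -> nat) A K :
  computable F -> computable G -> computable A -> computable K ->
  computable (fun x => prim F G (A x) (K x)).
Proof.
move=> HF HG HA HK.
exact: (@cmp_rec (fun _ => F) (fun _ => G) A K (cmp_comp HF (cmp_sn cmp_id))
  (cmp_comp HG (cmp_sn cmp_id)) HA HK).
Qed.

Lemma cmp_pred f : computable f -> computable (fun x => (f x).-1).
Proof.
move=> Hf.
have := cmp_rec0 (F := fun _ => 0) (G := fun q => fs (sn q)) (cmp_const 0)
  (cmp_fs (cmp_sn cmp_id)) (cmp_const 0) Hf.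
apply: cmp_ext => x; case: (f x) => //= k; by rewrite ?(fs_pair, sn_pair).
Qed.

Lemma cmp_add f g : computable f -> computable g -> computable (fun x => f x + g x).
Proof.
move=> Hf Hg.
have := cmp_rec0 (F := fun a => a) (G := fun q => (sn (sn q)).+1) cmp_id
  (cmp_succ (cmp_sn (cmp_sn cmp_id))) Hf Hg.
apply: cmp_ext => x; elim: (g x) => [|k IH] /=; by rewrite ?addn0 ?(fs_pair, sn_pair) ?IH ?addnS.
Qed.

Lemma cmp_sub f g : computable f -> computable g -> computable (fun x => f x - g x).
Proof.
move=> Hf Hg.
have := cmp_rec0 (F := fun a => a) (G := fun q => (sn (sn q)).-1) cmp_id
  (cmp_pred (cmp_sn (cmp_sn cmp_id))) Hf Hg.
apply: cmp_ext => x; elim: (g x) => [|k IH] /=; by rewrite ?subn0 ?(fs_pair, sn_pair) ?IH ?subnS.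
Qed.

Lemma cmp_mul f g : computable f -> computable g -> computable (fun x => f x * g x).
Proof.
move=> Hf Hg.
have := cmp_rec0 (F := fun _ => 0) (G := fun q => fs q + sn (sn q)) (cmp_const 0)
  (cmp_add (cmp_fs cmp_id) (cmp_sn (cmp_sn cmp_id))) Hf Hg.
apply: cmp_ext => x; elim: (g x) => [|k IH] /=; by rewrite ?muln0 ?(fs_pair, sn_pair) ?IH ?mulnS.
Qed.

Lemma cmp_exp2 f : computable f -> computable (fun x => 2 ^ f x).
Proof.
move=> Hf.
have := cmp_rec0 (F := fun _ => 1) (G := fun q => sn (sn q) + sn (sn q)) (cmp_const 1)
  (cmp_add (cmp_sn (cmp_sn cmp_id)) (cmp_sn (cmp_sn cmp_id))) (cmp_const 0) Hf.
apply: cmp_ext => x; elim: (f x) => [|k IH] /=; by rewrite ?expn0 ?(fs_pair, sn_pair) ?IH ?expnS ?mul2n ?addnn.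
Qed.

Lemma cmpb_eq f g : computable f -> computable g -> computable (fun x => nat_of_bool (f x == g x)).
Proof.
move=> Hf Hg.
have := cmp_ifz (cmp_add (cmp_sub Hf Hg) (cmp_sub Hg Hf)) (cmp_const 1) (cmp_const 0).
apply: cmp_ext => x; rewrite /ifz.
case: eqP => [->|ne]; first by rewrite subnn.
case E: (_ + _) => //; exfalso; apply: ne; lia.
Qed.

Lemma cmpb_leq f g : computable f -> computable g -> computable (fun x => nat_of_bool (f x <= g x)).
Proof.
move=> Hf Hg.
have := cmp_ifz (cmp_sub Hf Hg) (cmp_const 1) (cmp_const 0).
apply: cmp_ext => x; rewrite /ifz -subn_eq0; by case: (f x - g x).
Qed.

Lemma cmpb_and f g : computable (fun x => nat_of_bool (f x)) -> computable (fun x => nat_of_bool (g x)) ->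
  computable (fun x => nat_of_bool (f x && g x)).
Proof.
move=> Hf Hg; have := cmp_ifz Hf (cmp_const 0) Hg.
apply: cmp_ext => x; by case: (f x).
Qed.

Lemma cmpb_or f g : computable (fun x => nat_of_bool (f x)) -> computable (fun x => nat_of_bool (g x)) ->
  computable (fun x => nat_of_bool (f x || g x)).
Proof.
move=> Hf Hg; have := cmp_ifz Hf Hg (cmp_const 1).
apply: cmp_ext => x; by case: (f x).
Qed.

Lemma cmpb_not f : computable (fun x => nat_of_bool (f x)) ->
  computable (fun x => nat_of_bool (~~ f x)).
Proof.
move=> Hf; have := cmp_ifz Hf (cmp_const 1) (cmp_const 0).
apply: cmp_ext => x; by case: (f x).
Qed.

Definition bif (b : bool) (u v : nat) := if b then u else v.
Lemma cmp_if (b : nat -> bool) u v : computable (fun x => nat_of_bool (b x)) ->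
  computable u -> computable v -> computable (fun x => bif (b x) (u x) (v x)).
Proof.
move=> Hb Hu Hv; have := cmp_ifz Hb Hv Hu.
apply: cmp_ext => x; by case: (b x).
Qed.

Fixpoint bex (P : nat -> bool) (n : nat) : bool :=
  if n is n'.+1 then bex P n' || P n' else false.
Definition ball (P : nat -> bool) (n : nat) : bool := ~~ bex (fun i => ~~ P i) n.

Lemma bexP (P : nat -> bool) n : reflect (exists2 i, i < n & P i) (bex P n).
Proof.
elim: n => [|n IH] /=; first by constructor => -[].
apply: (iffP orP) => [[/IH [i ??]|H]|[i Hi Pi]].
- by exists i => //; apply: ltnW.
- by exists n.
- move: Hi; rewrite ltnS leq_eqVlt => /orP [/eqP E|Hi]; first by right; rewrite -E.
  by left; apply/IH; exists i.
Qed.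

Lemma ballP (P : nat -> bool) n : reflect (forall i, i < n -> P i) (ball P n).
Proof.
rewrite /ball; apply: (iffP negP) => [H i Hi|H].
  apply/negPn/negP => nP; apply: H; apply/bexP; by exists i.
move=> /bexP [i Hi]; by rewrite H.
Qed.

Lemma cmpb2 (P : nat -> nat -> bool) g h :
  computable (fun w => nat_of_bool (P (fs w) (sn w))) -> computable g -> computable h ->
  computable (fun x => nat_of_bool (P (g x) (h x))).
Proof. exact: (cmp2 (f := fun a b => nat_of_bool (P a b))). Qed.

Lemma cmpb_bex (P : nat -> nat -> bool) B :
  computable (fun w => nat_of_bool (P (fs w) (sn w))) -> computable B ->
  computable (fun x => nat_of_bool (bex (P x) (B x))).
Proof.
move=> HP HB.
have HG : computable (fun w => nat_of_bool ((sn (sn (sn w)) != 0) || P (fs w) (fs (sn (sn w))))).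
  apply: cmpb_or; first by apply: cmpb_not; apply: cmpb_eq;
    [exact: cmp_sn (cmp_sn (cmp_sn cmp_id)) | exact: cmp_const].
  apply: cmpb2 => //; [exact: cmp_fs cmp_id | exact: cmp_fs (cmp_sn (cmp_sn cmp_id))].
have := @cmp_rec (fun _ _ => 0) (fun c q => nat_of_bool ((sn (sn q) != 0) || P c (fs (sn q))))
  (fun _ => 0) B (cmp_const 0) HG (cmp_const 0) HB.
apply: cmp_ext => x; elim: (B x) => [|k IH] //=.
rewrite ?(fs_pair, sn_pair) IH; by case: (bex (P x) k).
Qed.

Lemma cmpb_ball (P : nat -> nat -> bool) B :
  computable (fun w => nat_of_bool (P (fs w) (sn w))) -> computable B ->
  computable (fun x => nat_of_bool (ball (P x) (B x))).
Proof.
move=> HP HB; apply: cmpb_not.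
exact: (@cmpb_bex (fun a b => ~~ P a b) B (cmpb_not HP) HB).
Qed.

Definition recstep (eg : nat -> nat) (q : nat) : nat :=
  ifz (sn (sn q)) 0 (eg (npair (fs q) (npair (fs (sn q)) (sn (sn q)).-1))).
Definition mustep (ef : nat -> nat) (q : nat) : nat :=
  bif (sn (sn q) == 1)
    (ifz (ef (npair (fs q) (fs (sn q)))) 0
        (ifz (ef (npair (fs q) (fs (sn q)))).-1 (fs (sn q)).+2 1))
    (sn (sn q)).
Definition must (ef : nat -> nat) (x k : nat) := prim (fun _ => 1) (mustep ef) x k.
Definition muout (s : nat) := ifz s 0 (ifz s.-1 0 s.-1).

Fixpoint ev (n : nat) (p : prf) (x : nat) : nat :=
  match p with
  | PZero => 1
  | PSucc => x.+2
  | PId => x.+1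
  | PFst => (fs x).+1
  | PSnd => (sn x).+1
  | PComp f g => ifz (ev n g x) 0 (ev n f (ev n g x).-1)
  | PPair f g => ifz (ev n f x) 0 (ifz (ev n g x) 0 (npair (ev n f x).-1 (ev n g x).-1).+1)
  | PRec f g => prim (ev n f) (recstep (ev n g)) (fs x) (sn x)
  | PMu f => muout (must (ev n f) x n)
  end.

Lemma cmp_evapp p a b : computable (fun w => ev (sn w) p (fs w)) ->
  computable a -> computable b -> computable (fun x => ev (b x) p (a x)).
Proof. move=> H Ha Hb; exact: (cmp2 (f := fun y n => ev n p y)). Qed.

Ltac cmpt1 := match goal with
  | |- computable (fun x => x) => exact cmp_id
  | |- computable id => exact cmp_id
  | |- computable (fun x => ?c) => exact (cmp_const c)
  | |- computable (fun x => ev (@?b x) ?p (@?a x)) => apply: (@cmp_evapp p a b); [eassumption| |]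
  | |- computable (fun x => fs (@?f x)) => apply: (@cmp_fs f)
  | |- computable (fun x => sn (@?f x)) => apply: (@cmp_sn f)
  | |- computable (fun x => S (@?f x)) => apply: (@cmp_succ f)
  | |- computable (fun x => predn (@?f x)) => apply: (@cmp_pred f)
  | |- computable (fun x => npair (@?f x) (@?g x)) => apply: (@cmp_pair f g)
  | |- computable (fun x => addn (@?f x) (@?g x)) => apply: (@cmp_add f g)
  | |- computable (fun x => subn (@?f x) (@?g x)) => apply: (@cmp_sub f g)
  | |- computable (fun x => muln (@?f x) (@?g x)) => apply: (@cmp_mul f g)
  | |- computable (fun x => expn 2 (@?f x)) => apply: (@cmp_exp2 f)
  | |- computable (fun x => ifz (@?f x) (@?g x) (@?h x)) => apply: (@cmp_ifz f g h)
  | |- computable (fun x => bif (@?b x) (@?u x) (@?v x)) => apply: (@cmp_if b u v)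
  | |- computable (fun x => nat_of_bool (@eq_op _ (@?f x) (@?g x))) => apply: (@cmpb_eq f g)
  | |- computable (fun x => nat_of_bool (leq (@?f x) (@?g x))) => apply: (@cmpb_leq f g)
  | |- computable (fun x => nat_of_bool (andb (@?f x) (@?g x))) => apply: (@cmpb_and f g)
  | |- computable (fun x => nat_of_bool (orb (@?f x) (@?g x))) => apply: (@cmpb_or f g)
  | |- computable (fun x => nat_of_bool (negb (@?f x))) => apply: (@cmpb_not f)
  | |- computable (fun x => nat_of_bool (bex (fun i => @?P x i) (@?B x))) =>
      apply: (@cmpb_bex P B); cbv beta
  | |- computable (fun x => nat_of_bool (ball (fun i => @?P x i) (@?B x))) =>
      apply: (@cmpb_ball P B); cbv beta
  | H : computable (fun w => nat_of_bool (?Q (fs w) (sn w))) |-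
      computable (fun x => nat_of_bool (?Q (@?f x) (@?g x))) =>
      apply: (@cmpb2 Q f g H)
  end.
Ltac cmpt := repeat cmpt1.

Lemma cmp_ev p : computable (fun w => ev (sn w) p (fs w)).
Proof.
elim: p => [||||| f IHf g IHg | f IHf g IHg | f IHf g IHg | f IHf] /=.
- cmpt.
- cmpt.
- cmpt.
- cmpt.
- cmpt.
- idtac "comp". cmpt. idtac "pair". cmpt.
- idtac "rec". 
  apply: (@cmp_rec (fun c a => ev (sn c) f a) (fun c q => recstep (ev (sn c) g) q)); rewrite /recstep; cmpt.
- idtac "mu". rewrite /muout /must.
  apply: cmp_ifz; [|cmpt|apply: cmp_ifz; [apply: cmp_pred|cmpt|apply: cmp_pred]];
  apply: (@cmp_rec (fun _ _ => 1) (fun c q => mustep (ev (sn c) f) q)); rewrite /mustep; cmpt.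
Qed.

Lemma must0 ef x : must ef x 0 = 1. Proof. by []. Qed.
Lemma mustS ef x i : must ef x i.+1 =
  bif (must ef x i == 1)
    (ifz (ef (npair x i)) 0 (ifz (ef (npair x i)).-1 i.+2 1)) (must ef x i).
Proof. by rewrite /must /= /mustep ?(fs_pair, sn_pair). Qed.

Lemma must_inv ef x i :
  (must ef x i = 1 -> forall m, m < i -> exists k, ef (npair x m) = k.+2) /\
  (forall v, must ef x i = v.+2 -> ef (npair x v) = 1 /\
      forall m, m < v -> exists k, ef (npair x m) = k.+2).
Proof.
elim: i => [|i [IH1 IH2]]; first by split => // v.
rewrite mustS /bif; case: eqP => [E|NE].
  case R: (ef (npair x i)) => [|[|k]] /=; first by split.
    split => // v [<-]; split => //; exact: IH1.
  split => // _ m; rewrite ltnS leq_eqVlt => /orP [/eqP ->|Hm]; first by exists k.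
  exact: IH1.
split => // E; by case: NE.
Qed.

Lemma must_abs ef x i j : must ef x i != 1 -> must ef x (i + j) = must ef x i.
Proof.
move=> H; elim: j => [|j IH]; first by rewrite addn0.
by rewrite addnS mustS IH /bif (negbTE H).
Qed.

Lemma ev_sound p : forall n x y, ev n p x = y.+1 -> peval p x y.
Proof.
elim: p => [||||| f IHf g IHg | f IHf g IHg | f IHf g IHg | f IHf] n x y /=.
- by case=> <-; constructor.
- by case=> <-; constructor.
- by case=> <-; constructor.
- by case=> <-; constructor.
- by case=> <-; constructor.
- case R: (ev n g x) => [|r] //= E.
  apply: ev_comp; [exact: (IHg n) R | exact: (IHf n)].
- case R1: (ev n f x) => [|r1] //=; case R2: (ev n g x) => [|r2] //= [<-].
  apply: ev_pair; [exact: (IHf n) R1 | exact: (IHg n) R2].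
- suff H : forall k a x y, nunpair x = (a, k) ->
    prim (ev n f) (recstep (ev n g)) a k = y.+1 -> peval (PRec f g) x y.
    apply: H; by case: (nunpair x).
  elim=> [|k IH] a z w Ez /=.
    move=> E; apply: ev_rec0 Ez _; exact: (IHf n).
  rewrite /recstep ?(fs_pair, sn_pair).
  case R: (prim _ _ a k) => [|s] //= E.
  apply: (ev_recS (n := k) (y := s)) Ez _ _.
    apply: (IH a) R; by rewrite nunpair_npair.
  exact: (IHg n).
- rewrite /muout; case R: (must (ev n f) x n) => [|[|s]] //= [<-].
  have [_ H2] := must_inv (ev n f) x n.
  have [H3 H4] := H2 _ R.
  apply: ev_mu; first exact: (IHf n).
  move=> m Hm; have [k Hk] := H4 m Hm; exists k; exact: (IHf n).
Qed.

Lemma ev_mono p : forall n n' x y, n <= n' -> ev n p x = y.+1 -> ev n' p x = y.+1.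
Proof.
elim: p => [||||| f IHf g IHg | f IHf g IHg | f IHf g IHg | f IHf] n n' x y Hn //=.
- case R: (ev n g x) => [|r] //= E.
  by rewrite (IHg n n' x r Hn R) /= (IHf n n' _ _ Hn E).
- case R1: (ev n f x) => [|r1] //=; case R2: (ev n g x) => [|r2] //= E.
  by rewrite (IHf n n' x r1 Hn R1) (IHg n n' x r2 Hn R2).
- move: (fs x) (sn x) y => a k; elim: k => [|k IH] z /=.
    exact: IHf.
  rewrite /recstep ?(fs_pair, sn_pair).
  case R: (prim _ _ a k) => [|s] //= E.
  by rewrite (IH s R) /= (IHg n n' _ _ Hn E).
- rewrite /muout.
  have M : forall i, must (ev n f) x i != 0 -> must (ev n' f) x i = must (ev n f) x i.
    elim=> [|i IH] //.
    rewrite !mustS.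
    case E0: (must (ev n f) x i) => [|s].
      by rewrite /bif.
    rewrite IH ?E0 //.
    case: s E0 => [|s] E0 /=; last by [].
    case R: (ev n f (npair x i)) => [|r] /=; first by [].
    by rewrite (IHf n n' _ _ Hn R).
  case R: (must (ev n f) x n) => [|[|s]] //= [<-].
  have E1 : must (ev n' f) x n = s.+2 by rewrite M R.
  have := @must_abs (ev n' f) x n (n' - n); rewrite subnKC // E1 => -> //.
Qed.

Lemma ev_mono' p n n' x y : n <= n' -> ev n p x = y.+1 -> ev n' p x = y.+1.
Proof. exact: ev_mono. Qed.

Lemma fuel_bound f x n :
  (forall m, m < n -> exists N k, ev N f (npair x m) = k.+2) ->
  exists N, forall m, m < n -> exists k, ev N f (npair x m) = k.+2.
Proof.
elim: n => [|n IH] H; first by exists 0.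
have [N1 H1] : exists N, forall m, m < n -> exists k, ev N f (npair x m) = k.+2.
  apply: IH => m Hm; apply: H; exact: ltnW.
have [N2 [k2 H2]] := H n (ltnSn n).
exists (maxn N1 N2) => m; rewrite ltnS leq_eqVlt => /orP [/eqP ->|Hm].
  exists k2; apply: ev_mono' H2; exact: leq_maxr.
have [k Hk] := H1 m Hm; exists k; apply: ev_mono' Hk; exact: leq_maxl.
Qed.

Lemma ev_complete : forall p x y, peval p x y -> exists n, ev n p x = y.+1.
Proof.
fix IH 4. intros p x y H. destruct H.
- by exists 0.
- by exists 0.
- by exists 0.
- by exists 0.
- by exists 0.
- have [n1 E1] := IH _ _ _ H; have [n2 E2] := IH _ _ _ H0.
  exists (maxn n1 n2) => /=.
  rewrite (ev_mono' (leq_maxl n1 n2) E1) /=; exact: ev_mono' (leq_maxr n1 n2) E2.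
- have [n1 E1] := IH _ _ _ H; have [n2 E2] := IH _ _ _ H0.
  exists (maxn n1 n2) => /=.
  by rewrite (ev_mono' (leq_maxl n1 n2) E1) (ev_mono' (leq_maxr n1 n2) E2).
- have [n1 E1] := IH _ _ _ H0.
  exists n1 => /=; match goal with Ex : nunpair _ = _ |- _ => by rewrite Ex end.
- have [n1 E1] := IH _ _ _ H0; have [n2 E2] := IH _ _ _ H1.
  exists (maxn n1 n2) => /=; match goal with Ex : nunpair _ = _ |- _ => rewrite Ex end; rewrite /=.
  have E3 := ev_mono' (leq_maxl n1 n2) E1; rewrite /= ?(fs_pair, sn_pair) in E3; rewrite E3.
  rewrite /recstep ?(fs_pair, sn_pair) /=.
  exact: ev_mono' (leq_maxr n1 n2) E2.
- have [N0 E0] := IH _ _ _ H.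
  have [N1 H1] : exists N, forall m, m < n -> exists k, ev N f (npair x m) = k.+2.
    apply: fuel_bound => m Hm.
    case: (H0 m Hm) => k Hk.
    have [N HN] := IH _ _ _ Hk.
    by exists N, k.
  set N := maxn (maxn N0 N1) n.+1.
  have HN0 : N0 <= N by rewrite /N -maxnA leq_maxl.
  have HN1 : N1 <= N by rewrite /N (maxnC N0) -maxnA leq_maxl.
  have HNn : n.+1 <= N by rewrite /N leq_maxr.
  have S1 : forall i, i <= n -> must (ev N f) x i = 1.
    elim=> [|i IHi] // Hi.
    rewrite mustS IHi ?(ltnW Hi) //=.
    have [k Hk] := H1 i Hi.
    by rewrite (ev_mono' HN1 Hk).
  have S2 : must (ev N f) x n.+1 = n.+2.
    by rewrite mustS S1 //= (ev_mono' HN0 E0).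
  exists N => /=.
  have := @must_abs (ev N f) x n.+1 (N - n.+1).
  rewrite subnKC // S2 => -> //.
Qed.

Lemma ev_det p x y y' : peval p x y -> peval p x y' -> y = y'.
Proof.
move=> /ev_complete [n1 E1] /ev_complete [n2 E2].
have := ev_mono' (leq_maxl n1 n2) E1; rewrite (ev_mono' (leq_maxr n1 n2) E2).
by case.
Qed.

Lemma scode_cat s t : scode (s ++ t) = scode s + 2 ^ size s * scode t.
Proof.
elim: s => [|b s IH] /=; first by rewrite mul1n.
rewrite IH expnS doubleD -!muln2; case: b; lia.
Qed.

Lemma scode_bounds s : 2 ^ size s <= (scode s).+1 /\ (scode s).+2 <= 2 ^ (size s).+1.
Proof.
elim: s => [|b s [IH1 IH2]] //=; rewrite !expnS -!muln2 in IH2 *; case: b; lia.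
Qed.

Lemma scode_inj : injective scode.
Proof.
elim=> [|b s IH] [|b' s'] //=; rewrite -?muln2.
- case: b'; lia.
- case: b; lia.
move=> E.
have Hb : b = b' by move: E; case: b; case: b' => //; lia.
subst b'; congr (_ :: _); apply: IH; move: E; case: b; lia.
Qed.

Lemma scode_surj n : exists s, scode s = n.
Proof.
elim: n {-2}n (leqnn n) => [|N IH] n Hn.
  by exists [::]; move: Hn; rewrite leqn0 => /eqP ->.
case: n Hn => [|n] Hn; first by exists [::].
have [s Hs] := IH (n %/ 2) (leq_trans (leq_div n 2) Hn).
have E := divn_eq n 2; rewrite modn2 in E.
exists ((odd n) :: s) => /=; rewrite Hs -muln2; move: E; case: (odd n) => /= E; lia.
Qed.

Lemma size_scode s : size s <= scode s.
Proof.
have [H _] := scode_bounds s.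
have := ltn_expl (size s) (ltnSn 1); lia.
Qed.

Lemma scode_prefix_le s t : prefix s t -> scode s <= scode t.
Proof. by move=> /prefixP [u ->]; rewrite scode_cat leq_addr. Qed.

Lemma scode_prefix_lt s t : prefix s t -> s != t -> scode s < scode t.
Proof.
move=> /prefixP [u ->]; rewrite scode_cat.
case: u => [|b u]; first by rewrite cats0 eqxx.
move=> _ /=; have := expn_gt0 2 (size s); rewrite -muln2; case: b => /=; nia.
Qed.

Lemma size_uniq_bounds L L' d :
  2 ^ L <= d.+1 -> d.+2 <= 2 ^ L.+1 -> 2 ^ L' <= d.+1 -> d.+2 <= 2 ^ L'.+1 -> L = L'.
Proof.
move=> h1 h2 h3 h4.
have a : L < L'.+1 by rewrite -(ltn_exp2l _ _ (ltnSn 1)); lia.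
have b : L' < L.+1 by rewrite -(ltn_exp2l _ _ (ltnSn 1)); lia.
apply/eqP; rewrite eqn_leq; rewrite !ltnS in a b; by rewrite a b.
Qed.

Definition isprefc (d c : nat) : bool :=
  bex (fun L => bex (fun r => (c == d + 2 ^ L * r) && (2 ^ L <= d.+1) && (d.+2 <= 2 ^ L.+1))
                    c.+1) c.+1.

Lemma isprefcP s t : isprefc (scode s) (scode t) = prefix s t.
Proof.
apply/idP/idP.
  move=> /bexP [L HL /bexP [r Hr /andP [/andP [/eqP E h1] h2]]].
  have [u Hu] := scode_surj r.
  have [h3 h4] := scode_bounds s.
  have EL := size_uniq_bounds h1 h2 h3 h4; subst L.
  have : scode t = scode (s ++ u) by rewrite scode_cat Hu.
  move/scode_inj => ->; exact: prefix_prefix.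
move=> Hp; have := Hp; move=> /prefixP [u Eu].
have [h3 h4] := scode_bounds s.
apply/bexP; exists (size s).
  rewrite ltnS; apply: leq_trans (size_scode t); exact: size_prefix.
apply/bexP; exists (scode u).
  rewrite ltnS Eu scode_cat; have := expn_gt0 2 (size s); nia.
by rewrite Eu scode_cat eqxx h3 h4.
Qed.

Lemma cmp_isprefc : computable (fun w => nat_of_bool (isprefc (fs w) (sn w))).
Proof. rewrite /isprefc; cmpt. Qed.

Definition Sm (p : prf) (m c : nat) : bool :=
  ball (fun k => bex (fun d => isprefc d c && (ev c p (npair k d) != 0)) c.+1) m.+1.
Definition Dm (p : prf) (m c : nat) : bool :=
  (2 ^ m <= c) && Sm p m c &&
  ~~ bex (fun d => isprefc d c && (d != c) && (2 ^ m <= d) && Sm p m d) c.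

Lemma cmp_Sm p : computable (fun w => nat_of_bool (Sm p (fs w) (sn w))).
Proof. have := cmp_ev p; have := cmp_isprefc; rewrite /Sm => ??; cmpt. Qed.

Lemma cmp_Dm p : computable (fun w => nat_of_bool (Dm p (fs w) (sn w))).
Proof. have := cmp_Sm p; have := cmp_isprefc; rewrite /Dm => ??; cmpt. Qed.

Lemma ce_of_cmpb (P : nat -> bool) : computable (fun z => nat_of_bool (P z)) ->
  exists q, forall z, (exists y, peval q z y) <-> P z.
Proof.
move=> HP.
have [pg Hg] : computable (fun w => 1 - nat_of_bool (P (fs w))).
  apply: cmp_sub; first exact: cmp_const.
  exact: (cmp_comp HP (cmp_fs cmp_id)).
exists (PMu pg) => z; split.
  move=> [y Hy]; inversion Hy; subst.
  have := ev_det H0 (Hg (npair z y)); rewrite fs_pair; by case: (P z).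
move=> Pz; exists 0; apply: ev_mu => //.
have := Hg (npair z 0); by rewrite fs_pair Pz.
Qed.

Definition pre (X : cantor) (n : nat) : seq bool := mkseq X n.

Lemma pre_prefix X a b : a <= b -> prefix (pre X a) (pre X b).
Proof.
move=> Hab; rewrite prefixE size_mkseq; apply/eqP.
apply: (@eq_from_nth _ false); rewrite ?size_takel ?size_mkseq //.
move=> i Hi.
rewrite nth_take // !nth_mkseq //; exact: leq_trans Hi Hab.
Qed.

Lemma prefix_pre X n s : prefix s (pre X n) -> s = pre X (size s).
Proof.
move=> H; have Hs := size_prefix H; rewrite size_mkseq in Hs.
move: H; rewrite prefixE => /eqP <-.
apply: (@eq_from_nth _ false); rewrite ?size_takel ?size_mkseq //.
move=> i Hi; rewrite nth_take // !nth_mkseq //; exact: leq_trans Hi Hs.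
Qed.

Lemma cyl_pre X s : cyl s X -> s = pre X (size s).
Proof.
move=> H; apply: (@eq_from_nth _ false); rewrite ?size_mkseq // => i Hi.
by rewrite nth_mkseq // H.
Qed.

Lemma pre_cyl X n : cyl (pre X n) X.
Proof. move=> i; rewrite size_mkseq => Hi; by rewrite nth_mkseq. Qed.

Lemma cyl_prefix s t X : prefix s t -> cyl t X -> cyl s X.
Proof.
move=> /prefixP [u ->] H i Hi; rewrite H ?size_cat ?nth_cat ?Hi //.
exact: leq_trans Hi (leq_addr _ _).
Qed.

Lemma fin_max (Q : nat -> nat -> Prop) m :
  (forall k, k <= m -> exists L, forall L', L <= L' -> Q k L') ->
  exists L, forall L', L <= L' -> forall k, k <= m -> Q k L'.
Proof.
elim: m => [|m IH] H.
  have [L HL] := H 0 (leqnn 0); exists L => L' HL' k; rewrite leqn0 => /eqP ->; exact: HL.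
have [L1 H1] : exists L, forall L', L <= L' -> forall k, k <= m -> Q k L'.
  apply: IH => k Hk; apply: H; exact: leqW.
have [L2 H2] := H m.+1 (leqnn _).
exists (maxn L1 L2) => L' HL' k; rewrite leq_eqVlt => /orP [/eqP ->|Hk].
  apply: H2; exact: leq_trans (leq_maxr _ _) HL'.
apply: H1 => //; exact: leq_trans (leq_maxl _ _) HL'.
Qed.

Section Construction.
Variables (p : prf) (U : nat -> set (seq bool)).
Hypothesis HU : forall i s, U i s <-> exists y, peval p (npair i (scode s)) y.

Lemma U'_ce : unif_ce (fun m s => is_true (Dm p m (scode s))).
Proof.
have [q Hq] := ce_of_cmpb (cmp_Dm p).
exists q => i s; rewrite Hq; by rewrite fs_pair sn_pair.
Qed.

Lemma SmP m t : Sm p m (scode t) -> forall k, k <= m -> exists s, prefix s t /\ U k s.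
Proof.
move=> /ballP H k Hk; have /bexP [d _ /andP [Hd Hev]] := H k Hk.
have [s Es] := scode_surj d; subst d.
exists s; split; first by rewrite -isprefcP.
apply/HU; move: Hev; case E: (ev _ _ _) => [|y] // _; exists y; exact: ev_sound E.
Qed.

Lemma Sm_intro m t :
  (forall k, k <= m -> exists s n, prefix s t /\ n <= scode t /\ ev n p (npair k (scode s)) != 0) ->
  Sm p m (scode t).
Proof.
move=> H; apply/ballP => k Hk; have [s [n [Hs [Hn Hev]]]] := H k Hk.
apply/bexP; exists (scode s); first by rewrite ltnS scode_prefix_le.
rewrite isprefcP Hs /=; move: Hev; case E: (ev _ _ _) => [|y] // _.
by rewrite (ev_mono' Hn E).
Qed.

Lemma Dm_len m t : Dm p m (scode t) -> m <= size t.
Proof.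
move=> /andP [/andP [H _] _]; have [_ h2] := scode_bounds t.
have : 2 ^ m < 2 ^ (size t).+1 by lia.
by rewrite ltn_exp2l.
Qed.

Lemma Dm_inside m t k X : Dm p m (scode t) -> k <= m -> cyl t X -> cylS (U k) X.
Proof.
move=> /andP [/andP [_ HS] _] Hk HX.
have [s [Hs Us]] := SmP HS Hk.
exists s => //; exact: cyl_prefix Hs HX.
Qed.

Lemma Dm_antichain m t t' : Dm p m (scode t) -> Dm p m (scode t') -> prefix t t' -> t = t'.
Proof.
move=> /andP [/andP [H1 H2] _] /andP [_ H3] Hp.
apply/eqP; apply/negPn/negP => Hne; move/negP: H3; apply.
apply/bexP; exists (scode t); first exact: scode_prefix_lt.
rewrite isprefcP Hp H1 H2 /= !andbT (inj_eq scode_inj); exact: Hne.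
Qed.

Lemma Dm_cover m X : (forall k, k <= m -> cylS (U k) X) -> cylS (fun s => is_true (Dm p m (scode s))) X.
Proof.
move=> H.
have [L0 HL0] : exists L, forall L', L <= L' -> forall k, k <= m ->
    exists s n, prefix s (pre X L') /\ n <= scode (pre X L') /\ ev n p (npair k (scode s)) != 0.
  apply: fin_max => k Hk.
  have [s Us Xs] := H k Hk.
  have [y Hy] := (HU k s).1 Us.
  have [n En] := ev_complete Hy.
  exists (maxn (size s) n) => L' HL'; exists s, n; split; last split.
  - rewrite (cyl_pre Xs); apply: pre_prefix; exact: leq_trans (leq_maxl _ _) HL'.
  - apply: leq_trans (size_scode _); rewrite size_mkseq; exact: leq_trans (leq_maxr _ _) HL'.
  - by rewrite En.
pose Q L := (2 ^ m <= scode (pre X L)) && Sm p m (scode (pre X L)).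
have HQ : exists L, Q L.
  exists (maxn L0 m.+1); apply/andP; split.
    have [h1 _] := scode_bounds (pre X (maxn L0 m.+1)); rewrite size_mkseq in h1.
    have : 2 ^ m < 2 ^ (maxn L0 m.+1) by rewrite ltn_exp2l // leq_maxr.
    lia.
  apply: Sm_intro => k Hk; apply: HL0 => //; exact: leq_maxl.
case: (ex_minnP HQ) => L /andP [Q1 Q2] Lmin.
exists (pre X L); last exact: pre_cyl.
rewrite /= /Dm Q1 Q2 /=; apply/bexP => -[d Hd /andP [/andP [/andP [Hpre Hne] Hm] HS]].
have [s Es] := scode_surj d; subst d.
rewrite isprefcP in Hpre.
have Es := prefix_pre Hpre.
have Hsz := size_prefix Hpre; rewrite size_mkseq in Hsz.
have : size s < L.
  rewrite ltn_neqAle Hsz andbT; apply: contra Hne => /eqP E.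
  by rewrite Es E.
rewrite ltnNge => /negP; apply; apply: Lmin.
by rewrite /Q -Es Hm HS.
Qed.

End Construction.

Local Open Scope classical_set_scope.
Local Open Scope ring_scope.

Lemma sum_tupleS (R : nmodType) a (F : (a.+1).-tuple bool -> R) :
  \sum_(t : (a.+1).-tuple bool) F t =
  \sum_(b : bool) \sum_(t : a.-tuple bool) F [tuple of b :: t].
Proof.
rewrite pair_big /=.
rewrite (reindex (fun p : bool * a.-tuple bool => [tuple of p.1 :: p.2])) //=.
exists (fun t : (a.+1).-tuple bool => (thead t, [tuple of behead t])) => [[b t]|t] _ /=.
  by rewrite theadE; congr (_, _); apply: val_inj.
by rewrite [RHS]tuple_eta.
Qed.

Lemma sum_tuple0 (R : nmodType) (F : 0.-tuple bool -> R) :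
  \sum_(t : 0.-tuple bool) F t = F [tuple].
Proof. by rewrite (big_pred1 [tuple]) // => t; apply/esym/eqP/tuple0. Qed.

Lemma cyl_measurable s : measurable (cyl s : set cantorB).
Proof. apply: sub_sigma_algebra; by exists s. Qed.

Lemma cylS_bigcup (U : set (seq bool)) :
  cylS U = \bigcup_(n in pickle @` U) cyl (odflt [::] (unpickle n)).
Proof.
apply/seteqP; split => X.
  move=> [s Us Xs]; exists (pickle s); first by exists s.
  by rewrite pickleK.
move=> [n [s Us <-]]; rewrite pickleK /= => Xs; by exists s.
Qed.

Lemma cylS_measurable U : measurable (cylS U : set cantorB).
Proof.
rewrite cylS_bigcup; apply: bigcup_measurable => n _; exact: cyl_measurable.
Qed.

Lemma cyl_nil : cyl [::] = setT.
Proof. by apply/seteqP; split => X // _ i. Qed.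

Lemma cyl_rcons s b X : cyl (rcons s b) X <-> cyl s X /\ X (size s) = b.
Proof.
split.
  move=> H; split.
    move=> i Hi; rewrite H ?size_rcons ?nth_rcons ?Hi //; exact: ltnW.
  by rewrite H ?size_rcons // nth_rcons ltnn eqxx.
move=> [H1 H2] i; rewrite size_rcons ltnS leq_eqVlt => /orP [/eqP ->|Hi].
  by rewrite nth_rcons ltnn eqxx.
by rewrite nth_rcons Hi H1.
Qed.

Lemma cyl_split s : cyl s = cyl (rcons s false) `|` cyl (rcons s true).
Proof.
apply/seteqP; split => X.
  move=> H; case E: (X (size s)); [right|left]; by apply/cyl_rcons.
by move=> [/cyl_rcons [] | /cyl_rcons []].
Qed.

Lemma cyl_disj s : cyl (rcons s false) `&` cyl (rcons s true) = set0.
Proof.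
apply/seteqP; split => X // [/cyl_rcons [_ H1] /cyl_rcons [_ H2]].
by rewrite H1 in H2.
Qed.

Section Meas.
Variables (R : realType) (rho : seq bool -> R).
Hypothesis hsm : semi_measure rho.
Variable mu : {measure set cantorB -> \bar R}.
Hypothesis hmu : forall s : seq bool, mu (cyl s) = (rho_bar rho s)%:E.

Lemma rho_ge0 s : 0 <= rho s. Proof. by case: hsm => /(_ s) /andP []. Qed.
Lemma rho_split s : rho (rcons s false) + rho (rcons s true) <= rho s.
Proof. by case: hsm => _ [_]. Qed.

Lemma mu_cyl_le s x : ((rho_bar rho s)%:E <= x)%E -> (mu (cyl s) <= x)%E.
Proof. by rewrite hmu. Qed.
Lemma mu_cyl_ge s x : (x <= (rho_bar rho s)%:E)%E -> (x <= mu (cyl s))%E.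
Proof. by rewrite hmu. Qed.

Fixpoint LS (a : nat) (s : seq bool) : R :=
  if a is a'.+1 then LS a' (rcons s false) + LS a' (rcons s true) else rho s.

Lemma LS_tuple a s : LS a s = \sum_(t : a.-tuple bool) rho (s ++ t).
Proof.
elim: a s => [|a IH] s /=; first by rewrite sum_tuple0 /= cats0.
rewrite sum_tupleS big_bool /= !IH addrC.
by congr (_ + _); apply: eq_bigr => t _; rewrite cat_rcons.
Qed.

Lemma LS_ge0 a s : 0 <= LS a s.
Proof. elim: a s => [|a IH] s /=; [exact: rho_ge0 | exact: addr_ge0]. Qed.

Lemma LS_decr a s : LS a.+1 s <= LS a s.
Proof.
elim: a s => [|a IH] s; first exact: rho_split.
rewrite [LS a.+2 s]/= [LS a.+1 s]/=; apply: lerD; exact: IH.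
Qed.

Lemma LS_le a b s : (a <= b)%N -> LS b s <= LS a s.
Proof.
move=> /subnKC <-; elim: (b - a)%N => [|k IH]; first by rewrite addn0.
rewrite addnS; exact: le_trans (LS_decr _ _) IH.
Qed.

Lemma rho_bar_LS s : rho_bar rho s = inf [set LS k s | k in [set: nat]].
Proof.
rewrite /rho_bar; congr (inf _); apply/seteqP; split => x [k _ <-]; exists k => //;
  by rewrite LS_tuple.
Qed.

Lemma has_inf_LS s : has_inf [set LS k s | k in [set: nat]].
Proof.
split; first by exists (LS 0 s), 0%N.
exists 0 => x [k _ <-]; exact: LS_ge0.
Qed.

Lemma rho_bar_le_LS s k : rho_bar rho s <= LS k s.
Proof.
rewrite rho_bar_LS; apply: ge_inf; first by case: (has_inf_LS s).
by exists k.
Qed.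

Lemma rho_bar_le s : rho_bar rho s <= rho s.
Proof. exact: (rho_bar_le_LS s 0). Qed.

Lemma rho_bar_ge0 s : 0 <= rho_bar rho s.
Proof.
rewrite rho_bar_LS; apply: lb_le_inf; first by exists (LS 0 s), 0%N.
move=> x [k _ <-]; exact: LS_ge0.
Qed.

Lemma LS_approx s (e : R) : 0 < e ->
  exists M, forall m, (M <= m)%N -> LS m s <= rho_bar rho s + e.
Proof.
move=> e0; have [x [k _ <-] Hk] := inf_adherent e0 (has_inf_LS s).
exists k => m Hm; rewrite rho_bar_LS; apply: le_trans (LS_le s Hm) _.
exact: ltW.
Qed.


Lemma sum_le_cond (L : seq (seq bool)) (P Q1 Q2 : pred (seq bool)) (f : seq bool -> R) :
  (forall x, 0 <= f x) -> (forall x, x \in L -> P x -> Q1 x || Q2 x) ->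
  \sum_(x <- L | P x) f x <= \sum_(x <- L | Q1 x) f x + \sum_(x <- L | Q2 x) f x.
Proof.
move=> f0 H; rewrite big_mkcond [X in _ <= X + _]big_mkcond [X in _ <= _ + X]big_mkcond -big_split /=.
rewrite big_seq [X in _ <= X]big_seq; apply: ler_sum => x Hx.
case Px: (P x); last by case: (Q1 x); case: (Q2 x); rewrite ?addr0 ?add0r ?addr_ge0.
have := H x Hx Px; case: (Q1 x); case: (Q2 x) => //= _; rewrite ?addr0 ?add0r //.
by rewrite lerDl.
Qed.

Lemma sum_le_cond1 (L : seq (seq bool)) (P Q : pred (seq bool)) (f : seq bool -> R) :
  (forall x, 0 <= f x) -> (forall x, x \in L -> P x -> Q x) ->
  \sum_(x <- L | P x) f x <= \sum_(x <- L | Q x) f x.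
Proof.
move=> f0 H; have := @sum_le_cond L P Q pred0 f f0.
rewrite (big_pred0 _ _ _ _ (fun _ => erefl)) addr0; apply => x Hx Px; by rewrite H.
Qed.

Lemma sum_cond0 (L : seq (seq bool)) (P : pred (seq bool)) (f : seq bool -> R) :
  (forall x, x \in L -> ~~ P x) -> \sum_(x <- L | P x) f x = 0.
Proof. move=> H; rewrite big_seq_cond big1 // => x /andP [Hx Px]; by rewrite (negbTE (H x Hx)) in Px. Qed.

Lemma prefix_ext (s t : seq bool) : prefix s t -> s != t ->
  exists b, prefix (rcons s b) t.
Proof.
move=> /prefixP [[|b u] ->]; first by rewrite cats0 eqxx.
move=> _; exists b; rewrite -cat_rcons; exact: prefix_prefix.
Qed.

Section Tree.
Variable L : seq (seq bool).

Fixpoint Hd (d : nat) (s : seq bool) : R :=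
  if s \in L then rho s else
  if d is d'.+1 then Hd d' (rcons s false) + Hd d' (rcons s true) else 0.
Fixpoint Md (d : nat) (s : seq bool) : R :=
  if s \in L then 0 else
  if d is d'.+1 then Md d' (rcons s false) + Md d' (rcons s true) else rho s.
Fixpoint Ha (a d : nat) (s : seq bool) : R :=
  if a is a'.+1 then Ha a' d (rcons s false) + Ha a' d (rcons s true) else Hd d s.
Fixpoint Ma (a d : nat) (s : seq bool) : R :=
  if a is a'.+1 then Ma a' d (rcons s false) + Ma a' d (rcons s true) else Md d s.

Lemma HMd d s : Hd d s + Md d s <= rho s.
Proof.
elim: d s => [|d IH] s /=; case: (s \in L); rewrite ?addr0 ?add0r //.
apply: le_trans (rho_split s); rewrite addrACA; apply: lerD; exact: IH.
Qed.

Lemma HMa a d s : Ha a d s + Ma a d s <= LS a s.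
Proof.
elim: a s => [|a IH] s /=; first exact: HMd.
rewrite addrACA; apply: lerD; exact: IH.
Qed.

Variable V : set cantorB.
Hypothesis mV : measurable V.
Hypothesis HLV : forall x, x \in L -> cyl x `<=` V.

Lemma cylD_measurable s : measurable (cyl s `\` V : set cantorB).
Proof. apply: measurableD => //; exact: cyl_measurable. Qed.

Lemma cylD_split s : cyl s `\` V = (cyl (rcons s false) `\` V) `|` (cyl (rcons s true) `\` V).
Proof. by rewrite {1}cyl_split setDUl. Qed.

Lemma Md_mu d s : (mu (cyl s `\` V) <= (Md d s)%:E)%E.
Proof.
elim: d s => [|d IH] s /=.
  case: ifP => [/HLV H|_].
    by rewrite (_ : _ `\` _ = set0) ?measure0 //; apply/seteqP; split => x // [/H].
  apply: (@le_trans _ _ (mu (cyl s))).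
    apply: le_measure; rewrite ?inE; first exact: cylD_measurable; first exact: cyl_measurable; by move=> x [].

  apply: mu_cyl_le; by rewrite lee_fin rho_bar_le.
case: ifP => [/HLV H|_].
  by rewrite (_ : _ `\` _ = set0) ?measure0 //; apply/seteqP; split => x // [/H].
rewrite cylD_split EFinD; apply: le_trans (measureU2 _ _ _) _; try exact: cylD_measurable.
apply: leeD; exact: IH.
Qed.

Lemma Ma_mu a d s : (mu (cyl s `\` V) <= (Ma a d s)%:E)%E.
Proof.
elim: a s => [|a IH] s /=; first exact: Md_mu.
rewrite cylD_split EFinD; apply: le_trans (measureU2 _ _ _) _; try exact: cylD_measurable.
apply: leeD; exact: IH.
Qed.

Hypothesis Luniq : uniq L.
Hypothesis Lanti : forall x y, x \in L -> y \in L -> prefix x y -> x = y.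

Lemma Hd_ge d s :
  \sum_(x <- L | prefix s x && (size x <= size s + d)%N) rho x <= Hd d s.
Proof.
elim: d s => [|d IH] s /=.
  case: ifP => sL.
    rewrite (big_rem s) //= prefix_refl addn0 leqnn /=.
    rewrite sum_cond0 ?addr0 // => x Hx; apply/negP => /andP [Hp _].
    have xL : x \in L by apply: mem_rem Hx.
    have := Lanti sL xL Hp => E; subst x.
    by move: Hx; rewrite mem_rem_uniq // inE eqxx.
  rewrite sum_cond0 // => x Hx; apply/negP => /andP [/prefixP [u E] Hs]; subst x.
  move: Hs; rewrite size_cat addn0 -{2}(addn0 (size s)) leq_add2l leqn0 size_eq0 => /eqP Eu.
  by rewrite Eu cats0 sL in Hx.
case: ifP => sL.
  rewrite (big_rem s) //= prefix_refl leq_addr /=.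
  rewrite sum_cond0 ?addr0 // => x Hx; apply/negP => /andP [Hp _].
  have xL : x \in L by apply: mem_rem Hx.
  have := Lanti sL xL Hp => E; subst x.
  by move: Hx; rewrite mem_rem_uniq // inE eqxx.
apply: le_trans (lerD (IH (rcons s false)) (IH (rcons s true))).
apply: sum_le_cond; first exact: rho_ge0.
move=> x Hx /andP [Hp Hs].
have Hne : s != x by apply/negP => /eqP E; subst x; rewrite Hx in sL.
have [b Hb] := prefix_ext Hp Hne.
case: b Hb => Hb; rewrite Hb !size_rcons !addSn -!addnS Hs ?orbT //.
Qed.

Lemma Ha_ge a d s :
  \sum_(x <- L | prefix s x && (size s + a <= size x)%N && (size x <= size s + a + d)%N) rho x
  <= Ha a d s.
Proof.
elim: a s => [|a IH] s /=.
  apply: le_trans (Hd_ge d s); apply: sum_le_cond1; first exact: rho_ge0.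
  by move=> x _ /andP [/andP [-> _]]; rewrite addn0.
apply: le_trans (lerD (IH (rcons s false)) (IH (rcons s true))).
apply: sum_le_cond; first exact: rho_ge0.
move=> x Hx /andP [/andP [Hp H1] H2].
have Hne : s != x.
  apply/negP => /eqP E; subst x; move: H1; rewrite addnS -{2}(addn0 (size s)).
  by rewrite ltn_add2l.
have [b Hb] := prefix_ext Hp Hne.
rewrite !size_rcons !addSn; rewrite addnS in H1 H2.
case: b Hb => Hb; by rewrite Hb H1 H2 ?orbT.
Qed.

End Tree.

Lemma size_le_sum (L : seq (seq bool)) x : x \in L -> (size x <= \sum_(y <- L) size y)%N.
Proof. by move=> Hx; rewrite (big_rem x) //= leq_addr. Qed.

Lemma key_bound (L : seq (seq bool)) (V : set cantorB) (mV : measurable V)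
  (HLV : forall x, x \in L -> cyl x `<=` V) (Luniq : uniq L)
  (Lanti : forall x y, x \in L -> y \in L -> prefix x y -> x = y)
  m (Lsize : forall x, x \in L -> (m <= size x)%N) :
  ((\sum_(x <- L) rho x)%:E + mu (setT `\` V) <= (LS m [::])%:E)%E.
Proof.
set d := (\sum_(x <- L) size x)%N.
have E : \sum_(x <- L) rho x = \sum_(x <- L | prefix (@nil bool) x && (size (@nil bool) + m <= size x)%N
    && (size x <= size (@nil bool) + m + d)%N) rho x.
  rewrite big_seq [X in _ = X]big_seq_cond; apply: eq_bigl => x.
  case Hx: (x \in L) => //=; rewrite prefix0s Lsize //= add0n.
  apply/esym; apply: leq_trans (size_le_sum Hx) (leq_addl _ _).
rewrite E -cyl_nil.
apply: le_trans (leeD (lee_tofin (Ha_ge Luniq Lanti m d [::])) (Ma_mu mV HLV m d [::])) _.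
rewrite -EFinD lee_fin; exact: HMa.
Qed.

Lemma esum_bound (S : set (seq bool)) (V : set cantorB) (mV : measurable V)
  (HSV : forall x, S x -> cyl x `<=` V)
  (Santi : forall x y, S x -> S y -> prefix x y -> x = y)
  m (Ssize : forall x, S x -> (m <= size x)%N) :
  (rho_set rho S + mu (setT `\` V) <= (LS m [::])%:E)%E.
Proof.
have muf : mu (setT `\` V) \is a fin_num.
  rewrite ge0_fin_numE // (le_lt_trans _ (ltry (LS m [::]))) //.
  apply: le_trans (le_measure _ _ _ (subsetT _)) _; rewrite ?inE //.
    exact: measurableD.
  have -> : [set: cantorB] = cyl [::] by rewrite cyl_nil.
  apply: mu_cyl_le; rewrite lee_fin; exact: rho_bar_le_LS.
rewrite -(fineK muf).
suff H : (rho_set rho S <= (LS m [::] - fine (mu (setT `\` V)))%:E)%E.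
  apply: le_trans (leeD H (lexx _)) _; by rewrite -EFinD subrK.
rewrite /rho_set.
apply: ge_ereal_sup => /= _ [A [finA AS] <-].
rewrite fsbig_finite // sumEFin lee_fin lerBrDr -lee_fin EFinD fineK //.
apply: key_bound => //.
- move=> x; rewrite in_fset_set // inE => /AS; exact: HSV.
- exact: finmap.fset_uniq.
- move=> x y; rewrite !in_fset_set // !inE => /AS Sx /AS Sy; exact: Santi.
- move=> x; rewrite in_fset_set // inE => /AS; exact: Ssize.
Qed.

Lemma mu_split V (mV : measurable V) : (rho_bar rho [::])%:E = (mu (setT `\` V) + mu V)%E.
Proof.
have E1 := measureDI mu (@measurableT _ cantorB) mV.
rewrite setTI in E1.
have E2 : mu [set: cantorB] = (rho_bar rho [::])%:E by rewrite -cyl_nil; exact: hmu.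
rewrite -E2; exact: E1.
Qed.

Lemma ereal_helper (x : \bar R) (a c : R) : (x + a%:E <= c%:E)%E -> (x <= (c - a)%:E)%E.
Proof.
case: x => [x||] //=; rewrite ?lee_fin //.
- move=> H; rewrite lerBrDr; exact: H.
- by move=> _; rewrite leNye.
Qed.

Lemma bound_m (S : set (seq bool)) (V : set cantorB) (mV : measurable V)
  (HSV : forall x, S x -> cyl x `<=` V)
  (Santi : forall x y, S x -> S y -> prefix x y -> x = y)
  m (Ssize : forall x, S x -> (m <= size x)%N) :
  (rho_set rho S <= (LS m [::] - rho_bar rho [::])%:E + mu V)%E.
Proof.
have H := esum_bound mV HSV Santi Ssize.
have E := mu_split mV.
have a0 : (0 <= mu (setT `\` V))%E by apply: measure_ge0.
have b0 : (0 <= mu V)%E by apply: measure_ge0.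
have f1 : mu (setT `\` V) \is a fin_num.
  rewrite ge0_fin_numE // (le_lt_trans _ (ltry (rho_bar rho [::]))) // E.
  by rewrite leeDl.
have f2 : mu V \is a fin_num.
  rewrite ge0_fin_numE // (le_lt_trans _ (ltry (rho_bar rho [::]))) // E.
  by rewrite leeDr.
rewrite -(fineK f1) in H E; rewrite -(fineK f2) in E *.
move: E; rewrite -EFinD => -[E].
apply: le_trans (ereal_helper H) _.
rewrite -EFinD lee_fin E; lra.
Qed.

Lemma mu_cylS_le (S : set (seq bool)) : (mu (cylS S) <= rho_set rho S)%E.
Proof.
rewrite cylS_bigcup bigcup_mkcond.
set P := pickle @` S.
set G := fun n => if n \in P then cyl (odflt [::] (unpickle n)) else set0.
have mG : forall n, measurable (G n : set cantorB).
  move=> n; rewrite /G; case: ifP => _; [exact: cyl_measurable | exact: measurable0].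
have H0 : (mu (\bigcup_n G n) <= \sum_(n <oo) mu (G n))%E.
  apply: measure_sigma_subadditive => //; exact: bigcupT_measurable.
set a := fun n => if n \in P then (rho (odflt [::] (unpickle n)))%:E else 0%E.
have H1 : (\sum_(n <oo) mu (G n) <= \sum_(n <oo) a n)%E.
  apply: lee_nneseries; first by move=> n _ _; apply: measure_ge0; exact: mG.
  move=> n _.
  rewrite /G /a; case: ifP => _; last by rewrite measure0.
  apply: mu_cyl_le; by rewrite lee_fin rho_bar_le.
have H2 : (\sum_(n <oo) a n <= rho_set rho S)%E.
  rewrite /a -eseries_mkcond nneseries_esum; last by move=> n _; rewrite lee_fin rho_ge0.
  rewrite set_mem_set /P esum_image; last by move=> x y _ _; exact: (pcan_inj (@pickleK _)).
  by apply: le_esum => i _; rewrite pickleK.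
exact: le_trans H0 (le_trans H1 H2).
Qed.

End Meas.

Unset Implicit Arguments.
Theorem theorem6p15 (R : realType) (rho : seq bool -> R)
  (hsm : semi_measure rho) (hlce : left_ce rho)
  (mu : {measure set cantorB -> \bar R})
  (hmu : forall s : seq bool, mu (cyl s) = (rho_bar rho s)%:E)
  (X : cantor) :
  W2R rho X <-> blind_W2R mu X.
Proof.
split.
- move=> HW V [U [[p Hp] HV]] Hlim HX.
  pose U' := fun m (s : seq bool) => is_true (Dm p m (scode s)).
  apply: (HW U').
  + exact: U'_ce.
  + have mV : forall m, measurable (V m : set cantorB).
      move=> m; rewrite HV; exact: cylS_measurable.
    apply: (@squeeze_cvge _ _ _ _ (fun=> 0%E) _
      (fun m => (LS rho m [::] - rho_bar rho [::])%:E + mu (V m))%E).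
    * apply: nearW => m; apply/andP; split.
        apply: esum_ge0 => x _; rewrite lee_fin; exact: rho_ge0.
      apply: (bound_m hsm hmu (mV m)).
      -- move=> x Ux Y HY; rewrite HV; exact: (Dm_inside Hp Ux (leqnn m) HY).
      -- move=> x y Ux Uy; exact: (Dm_antichain Ux Uy).
      -- move=> x Ux; exact: (Dm_len Ux).
    * exact: cvg_cst.
    * rewrite -[0%E]adde0; apply: cvgeD => //.
      apply/fine_cvgP; split; first exact: nearW.
      rewrite /comp /=.
      apply/cvgrPdist_le => e e0.
      have [M HM] := LS_approx hsm [::] e0.
      exists M => // n /= Hn.
      rewrite sub0r normrN ger0_norm; last by rewrite subr_ge0 rho_bar_le_LS.
      rewrite lerBlDl; exact: HM.
  + move=> m; apply: (Dm_cover Hp) => k Hk.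
    rewrite -HV; exact: HX.
- move=> HB U HU Hlim Hcov.
  apply: (HB (fun i => cylS (U i))).
  + by exists U.
  + apply: (@squeeze_cvge _ _ _ _ (fun=> 0%E) _ (fun i => rho_set rho (U i))) => //.
      apply: nearW => i; apply/andP; split; first exact: measure_ge0.
      exact: mu_cylS_le.
    exact: cvg_cst.
  + exact: Hcov.
Qed.
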